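(* Let $\mathcal{U}\subset\mathbb{R}^n\times\mathbb{R}^p$ be open, $\mathcal{D}\subset\mathcal{U}$ nonempty, $\Gamma:\mathcal{D}\times\mathbb{R}^m\rightrightarrows\mathbb{R}^q$ with $\Gamma(\xi,\cdot)$ positively homogeneous for all $\xi\in\mathcal{D}$, and $\mathcal{A}:\mathcal{U}\to\mathbb{R}^{q\times m}$. Suppose that $\Gamma$ is polyhedral. Then $\Gamma$ is outer semicontinuous, and for every $\bar\xi\in\mathcal{D}$, with $H:=\Gamma(\bar\xi,\cdot)$, $\mathcal{Z}:=\mathrm{bd}\,\mathbb{B}\cap\mathrm{dom}\,H$ and $\mathcal{Z}_0:=\{z\in\mathcal{Z}\mid 0\in\mathcal{A}(\bar\xi)z+H(z)\}$, the following hold: the set $\mathcal{A}(\bar\xi)\,\mathrm{dom}\,H$ is closed; and there exists $c\ge0$ such that for every $z\in\mathcal{Z}_0$ there are $\varepsilon,\delta>0$ with \[\Gamma(\xi,z')\cap\delta\mathbb{B}\subset\Gamma(\bar\xi,z')+c\|\xi-\bar\xi\|\mathbb{B}\quad\text{whenever }(\xi,z')\in(\mathcal{D}\times\mathrm{bd}\,\mathbb{B})\cap((\bar\xi,z)+\varepsilon\mathbb{B}).\]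
   Context: $\mathbb{B}$ is the closed unit ball and $\mathrm{bd}$ the boundary. A set-valued map $H$ is positively homogeneous if $H(\gamma z)=\gamma H(z)$ for all $\gamma>0$. $\Gamma$ is polyhedral if its graph $\{(\xi,z,\eta)\mid\eta\in\Gamma(\xi,z)\}$ is a finite union of convex polyhedra. $\Gamma$ is outer semicontinuous if $\limsup_{(\xi',z')\to(\xi,z)}\Gamma(\xi',z')\subset\Gamma(\xi,z)$ (Painlevé–Kuratowski) for all $(\xi,z)\in\mathcal{D}\times\mathbb{R}^m$. *)

(* Defs.v *)
From HB Require Import structures.
From mathcomp Require Import all_boot all_order all_algebra.
From mathcomp Require Import all_classical all_reals all_analysis.
Set Implicit Arguments. Unset Strict Implicit. Unset Printing Implicit Defensive.
Import Order.TTheory GRing.Theory Num.Theory.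
Import numFieldNormedType.Exports.
Local Open Scope classical_set_scope.
Local Open Scope ring_scope.

(* Vectors of R^k are column vectors 'cV[R]_k (their topology is the usual
   product = Euclidean topology from MathComp-Analysis). *)

Definition enorm (R : realType) (k : nat) (v : 'cV[R]_k) : R :=
  Num.sqrt (\sum_(i < k) (v i 0) ^+ 2).

Definition cball (R : realType) (k : nat) (c : 'cV[R]_k) (r : R) : set 'cV[R]_k :=
  [set x | enorm (x - c) <= r].

(* bd B : boundary of the closed Euclidean unit ball = unit sphere. *)
Definition unit_sphere (R : realType) (k : nat) : set 'cV[R]_k :=
  [set x | enorm x = 1].

Definition convex_polyhedron (R : realType) (k : nat) (P : set 'cV[R]_k) : Prop :=
  exists (r : nat) (M : 'M[R]_(r, k)) (b : 'cV[R]_r),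
    P = [set x | forall i : 'I_r, (M *m x) i 0 <= b i 0].

Definition svmap (R : realType) (N m q : nat) :=
  'cV[R]_N -> 'cV[R]_m -> set 'cV[R]_q.

(* The graph {(xi,z,eta) | xi \in D, eta \in Gamma(xi,z)} (encoded in
   R^(N+m+q) by stacking) is a finite union of convex polyhedra. *)
Definition polyhedral_map (R : realType) (N m q : nat)
    (D : set 'cV[R]_N) (G : svmap R N m q) : Prop :=
  exists (k : nat) (P : 'I_k -> set 'cV[R]_(N + m + q)),
    (forall i, convex_polyhedron (P i)) /\
    forall xi z eta,
      (D xi /\ G xi z eta) <-> exists i, P i (col_mx (col_mx xi z) eta).

Definition pos_homogeneous (R : realType) (m q : nat)
    (H : 'cV[R]_m -> set 'cV[R]_q) : Prop :=
  forall (gamma : R) (z : 'cV[R]_m), 0 < gamma ->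
    H (gamma *: z) = (fun eta => gamma *: eta) @` H z.

(* Painlevé–Kuratowski outer limit of Gamma at (xi, z), relative to the
   domain D x R^m:  eta is in it iff there are sequences (xi_k, z_k) in
   D x R^m converging to (xi, z) and eta_k in Gamma(xi_k, z_k), eta_k -> eta. *)
Definition outer_limit (R : realType) (N m q : nat)
    (D : set 'cV[R]_N) (G : svmap R N m q) (xi : 'cV[R]_N) (z : 'cV[R]_m)
    : set 'cV[R]_q :=
  [set eta | exists (xis : nat -> 'cV[R]_N) (zs : nat -> 'cV[R]_m)
                    (etas : nat -> 'cV[R]_q),
      (forall k, D (xis k)) /\ (forall k, G (xis k) (zs k) (etas k)) /\
      (xis @ \oo --> xi) /\ (zs @ \oo --> z) /\ (etas @ \oo --> eta)].

Definition outer_semicontinuous (R : realType) (N m q : nat)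
    (D : set 'cV[R]_N) (G : svmap R N m q) : Prop :=
  forall xi z, D xi -> outer_limit D G xi z `<=` G xi z.

Definition sdom (R : realType) (m q : nat) (H : 'cV[R]_m -> set 'cV[R]_q)
    : set 'cV[R]_m := [set z | exists eta, H z eta].

(* Main.v *)
Require Import Defs.
From HB Require Import structures.
From mathcomp Require Import all_boot all_order all_algebra.
From mathcomp Require Import all_classical all_reals all_analysis.
From mathcomp Require Import ring lra.
Import Order.TTheory GRing.Theory Num.Theory.
Import numFieldNormedType.Exports.
Local Open Scope classical_set_scope.
Local Open Scope ring_scope.
Set Implicit Arguments. Unset Strict Implicit. Unset Printing Implicit Defensive.

Section Norms.
Variable R : realType.

Definition sq (K : nat) (v : 'cV[R]_K) : R := \sum_(j < K) (v j 0) ^+ 2.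

Lemma sq_ge0 K (v : 'cV[R]_K) : 0 <= sq v.
Proof. by apply: sumr_ge0 => j _; rewrite sqr_ge0. Qed.

Lemma enormE K (v : 'cV[R]_K) : enorm v = Num.sqrt (sq v).
Proof. by []. Qed.

Lemma sq_col a b (u : 'cV[R]_a) (v : 'cV[R]_b) : sq (col_mx u v) = sq u + sq v.
Proof.
rewrite /sq big_split_ord /=; congr (_ + _); apply: eq_bigr => j _.
  by rewrite col_mxEu.
by rewrite col_mxEd.
Qed.

Lemma sqZ K c (v : 'cV[R]_K) : sq (c *: v) = c ^+ 2 * sq v.
Proof. by rewrite /sq mulr_sumr; apply: eq_bigr => j _; rewrite mxE exprMn. Qed.

Lemma sq0 K : sq (0 : 'cV[R]_K) = 0.
Proof. by rewrite /sq big1 // => j _; rewrite mxE expr0n. Qed.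

Lemma entry_sq K (v : 'cV[R]_K) j : (v j 0) ^+ 2 <= sq v.
Proof.
rewrite /sq (bigD1 j) //= lerDl; apply: sumr_ge0 => i _; exact: sqr_ge0.
Qed.

Lemma entry_enorm K (v : 'cV[R]_K) j : `|v j 0| <= enorm v.
Proof. by rewrite enormE -sqrtr_sqr ler_wsqrtr // entry_sq. Qed.

Lemma entry_mxnorm a b (v : 'M[R]_(a, b)) i j : `|v i j| <= `|v|.
Proof.
rewrite [leRHS]/Num.norm /= mx_normrE.
apply/bigmax_geP; right; exists (i, j) => //.
Qed.

Lemma lf_bound r K (B : 'M[R]_(r, K)) (v : 'cV[R]_K) X i :
  (forall j, `|v j 0| <= X) -> `|(B *m v) i 0| <= (\sum_j `|B i j|) * X.
Proof.
move=> hX; rewrite mxE mulr_suml.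
apply: le_trans (ler_norm_sum _ _ _) _.
apply: ler_sum => j _; rewrite normrM ler_wpM2l //.
Qed.

Lemma enorm_le K (v : 'cV[R]_K) e : 0 <= e -> sq v <= e ^+ 2 -> enorm v <= e.
Proof.
move=> e0 h; rewrite enormE -(ger0_norm e0) -sqrtr_sqr ler_wsqrtr //.
Qed.

Lemma sq_le K (v : 'cV[R]_K) e : enorm v <= e -> sq v <= e ^+ 2.
Proof.
move=> h; rewrite -(sqr_sqrtr (sq_ge0 v)) -enormE.
rewrite ler_sqr // ?nnegrE //; last exact: le_trans (sqrtr_ge0 _) h.
exact: sqrtr_ge0.
Qed.

Lemma enorm0 K : enorm (0 : 'cV[R]_K) = 0.
Proof. by rewrite enormE sq0 sqrtr0. Qed.

End Norms.

Set Implicit Arguments. Unset Strict Implicit. Unset Printing Implicit Defensive.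

Section FM.
Variables (R : realType) (K : nat).
Definition cstr := ('rV[R]_K * R)%type.
Definition cval (c : cstr) (x : 'cV[R]_K) : R := (c.1 *m x) 0 0.
Definition sat1 (c : cstr) x : bool := cval c x <= c.2.
Definition sat (s : seq cstr) x : bool := all (fun c => sat1 c x) s.

Lemma cvalD c x y : cval c (x + y) = cval c x + cval c y.
Proof. by rewrite /cval mulmxDr mxE. Qed.
Lemma cvalZ c t x : cval c (t *: x) = t * cval c x.
Proof. by rewrite /cval -scalemxAr mxE. Qed.
Lemma cval_comb (a b : R) (u v : 'rV[R]_K) (w : R) x :
  cval (a *: u + b *: v, w) x = a * cval (u, w) x + b * cval (v, w) x.
Proof. by rewrite /cval /= mulmxDl -!scalemxAl !mxE. Qed.

Definition comb d (p q : cstr) : cstr :=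
  ((- cval q d) *: p.1 + cval p d *: q.1, (- cval q d) * p.2 + cval p d * q.2).

Definition FM d (s : seq cstr) : seq cstr :=
  [seq c <- s | cval c d == 0] ++
  [seq comb d p q | p <- [seq c <- s | 0 < cval c d], q <- [seq c <- s | cval c d < 0]].

Lemma exists_between (L U : seq R) :
  (forall l u, l \in L -> u \in U -> l <= u) ->
  exists t, (forall l, l \in L -> l <= t) /\ (forall u, u \in U -> t <= u).
Proof.
elim: L => [|l L IH] h.
  exists (- \sum_(u <- U) `|u|); split => // u uU.
  rewrite lerNl; apply: (@le_trans _ _ `|u|); first by rewrite -normrN ler_norm.
  by rewrite (big_rem u uU) /= lerDl sumr_ge0.
have [|t [h1 h2]] := IH.
  by move=> l' u l'L uU; apply: h => //; rewrite inE l'L orbT.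
exists (Num.max l t); split.
  move=> l'; rewrite inE => /orP[/eqP->|l'L]; first by rewrite le_max lexx.
  by rewrite le_max h1 // orbT.
move=> u uU; rewrite ge_max h2 // andbT; apply: h => //; exact: mem_head.
Qed.

Lemma FM_spec d s x : sat (FM d s) x <-> exists t, sat s (x + t *: d).
Proof.
split; last first.
  move=> [t /allP hs]; apply/allP => c; rewrite mem_cat => /orP[].
    rewrite mem_filter => /andP[/eqP c0 cs]; have := hs c cs.
    by rewrite /sat1 cvalD cvalZ c0 mulr0 addr0.
  move=> /allpairsP [[p q] /= []]; rewrite !mem_filter.
  move=> /andP[pp ps] /andP[qn qs] ->.
  have := hs p ps; have := hs q qs; rewrite /sat1 /comb /= !cvalD !cvalZ.
  move=> hq hp; rewrite cval_comb.
  have e1 : cval (p.1, (- cval q d) * p.2 + cval p d * q.2) x = cval p x by [].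
  have e2 : cval (q.1, (- cval q d) * p.2 + cval p d * q.2) x = cval q x by [].
  rewrite e1 e2.
  set a := cval q d in qn hq *; set b := cval p d in pp hp *.
  have a0 : 0 <= - a by rewrite oppr_ge0 ltW.
  have := ler_wpM2l a0 hp; have := ler_wpM2l (ltW pp) hq.
  move=> h1 h2.
  have := lerD h2 h1.
  by apply: le_trans; rewrite le_eqVlt; apply/orP; left; apply/eqP; ring.
move=> /allP hs.
pose U := [seq (c.2 - cval c x) / cval c d | c <- s & 0 < cval c d].
pose L := [seq (c.2 - cval c x) / cval c d | c <- s & cval c d < 0].
have [|t [hL hU]] := exists_between (L := L) (U := U).
  move=> l u /mapP [q]; rewrite mem_filter => /andP[qn qs] -> /mapP [p].
  rewrite mem_filter => /andP[pp ps] ->.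
  have := hs (comb d p q); rewrite mem_cat; move/(_ _)/idP.
  have -> : comb d p q \in [seq comb d p q | p <- [seq c <- s | 0 < cval c d],
                                              q <- [seq c <- s | cval c d < 0]].
    by apply/allpairsP; exists (p, q); rewrite !mem_filter pp ps qn qs.
  rewrite orbT => /(_ isT); rewrite /sat1 /comb /= cval_comb.
  have e1 : cval (p.1, (- cval q d) * p.2 + cval p d * q.2) x = cval p x by [].
  have e2 : cval (q.1, (- cval q d) * p.2 + cval p d * q.2) x = cval q x by [].
  rewrite e1 e2.
  set a := cval q d in qn *; set b := cval p d in pp *.
  move=> h.
  have an : a != 0 by rewrite lt_eqF.
  have bn : b != 0 by rewrite gt_eqF.
  rewrite -subr_ge0.
  have -> : (p.2 - cval p x) / b - (q.2 - cval q x) / a =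
    ((- a * p.2 + b * q.2) - (- a * cval p x + b * cval q x)) / (b * - a).
    by field; rewrite an bn.
  by rewrite divr_ge0 ?subr_ge0 // mulr_ge0 // ?oppr_ge0 ltW.
exists t; apply/allP => c cs; rewrite /sat1 cvalD cvalZ.
case: (ltgtP (cval c d) 0) => hc.
- have hin : (c.2 - cval c x) / cval c d \in L.
    by apply: (map_f (fun c => (c.2 - cval c x) / cval c d)); rewrite mem_filter hc cs.
  move: (hL _ hin).
  by rewrite ler_ndivrMr // mulrC lerBrDl.
- have hin : (c.2 - cval c x) / cval c d \in U.
    by apply: (map_f (fun c => (c.2 - cval c x) / cval c d)); rewrite mem_filter hc cs.
  move: (hU _ hin).
  by rewrite ler_pdivlMr // mulrC lerBrDl.
- rewrite hc mulr0 addr0.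
  have := hs c; rewrite mem_cat mem_filter hc eqxx cs => /(_ isT).
  by [].
Qed.

End FM.

Set Implicit Arguments. Unset Strict Implicit. Unset Printing Implicit Defensive.

Section Elim.
Variables (R : realType) (K : nat).

Fixpoint ex_comb (ds : seq 'cV[R]_K) (P : 'cV[R]_K -> Prop) x : Prop :=
  match ds with
  | [::] => P x
  | d :: ds' => ex_comb ds' (fun y => exists c, P (y + c *: d)) x
  end.

Fixpoint FMall (ds : seq 'cV[R]_K) (s : seq (cstr R K)) :=
  match ds with [::] => s | d :: ds' => FMall ds' (FM d s) end.

Lemma ex_comb_ext ds : forall (P Q : 'cV[R]_K -> Prop),
  (forall y, P y <-> Q y) -> forall x, ex_comb ds P x <-> ex_comb ds Q x.
Proof.
elim: ds => [|d ds IH] P Q hPQ x /=; first exact: hPQ.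
apply: IH => y; split => -[c hc]; exists c; exact/hPQ.
Qed.

Lemma FMall_spec ds : forall s x, sat (FMall ds s) x <-> ex_comb ds (fun y => sat s y) x.
Proof.
elim: ds => [|d ds IH] s x //=.
rewrite IH; apply: ex_comb_ext => y; exact: FM_spec.
Qed.

End Elim.

Section Basis.
Variables (R : realType) (a b : nat).

Definition dir (k : 'I_b) : 'cV[R]_(a + b) := col_mx 0 (delta_mx k 0).

Lemma ex_comb_dir (l : seq 'I_b) : forall (P : 'cV[R]_(a + b) -> Prop) x,
  ex_comb (map dir l) P x <->
  exists y : 'cV[R]_b, (forall k, k \notin l -> y k 0 = 0) /\ P (x + col_mx 0 y).
Proof.
elim: l => [|k l IH] P x /=.
  split; first by move=> h; exists 0; split => [k _|]; rewrite ?mxE // col_mx0 addr0.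
  move=> [y [hy hP]]; have y0 : y = 0 by apply/matrixP => i j; rewrite ord1 hy // mxE.
  by move: hP; rewrite y0 col_mx0 addr0.
rewrite IH; split.
  move=> [y [hy [c hc]]]; exists (y + c *: delta_mx k 0); split.
    move=> k'; rewrite inE negb_or => /andP[nk nl]; rewrite !mxE hy //.
    by rewrite (negbTE nk) mulr0 addr0.
  by move: hc; rewrite /dir scale_col_mx scaler0 -addrA add_col_mx addr0.
move=> [y [hy hP]]; exists (y - y k 0 *: delta_mx k 0); split.
  move=> k' nl; rewrite !mxE; have [->|nk] := eqVneq k' k.
    by rewrite eqxx mulr1 subrr.
  by rewrite andFb mulr0 subr0 hy // inE negb_or nk nl.
exists (y k 0); move: hP; rewrite /dir scale_col_mx scaler0 -addrA add_col_mx addr0.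
by rewrite subrK.
Qed.

Lemma ex_comb_all (P : 'cV[R]_(a + b) -> Prop) (t : 'cV[R]_a) :
  (exists y, P (col_mx t y)) <-> ex_comb (map dir (enum 'I_b)) P (col_mx t 0).
Proof.
rewrite ex_comb_dir; split.
  by move=> [y hy]; exists y; split => [k|]; rewrite ?mem_enum // add_col_mx addr0 add0r.
by move=> [y [_ hy]]; exists y; move: hy; rewrite add_col_mx addr0 add0r.
Qed.

End Basis.

Section Cont.
Variable R : realType.

Lemma lin_cont a (u : 'rV[R]_a) : continuous (fun t : 'cV[R]_a => (u *m t) 0 0).
Proof.
have -> : (fun t : 'cV[R]_a => (u *m t) 0 0) = (fun t => \sum_(j <- enum 'I_a) u 0 j * t j 0).
  by apply: funext => t; rewrite mxE big_enum.
elim: (enum 'I_a) => [|j r IH].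
  have -> : (fun t : 'cV[R]_a => \sum_(j <- [::]) u 0 j * t j 0) = cst 0.
    by apply: funext => t; rewrite big_nil.
  exact: cst_continuous.
have -> : (fun t : 'cV[R]_a => \sum_(j0 <- j :: r) u 0 j0 * t j0 0) =
   (fun t : 'cV[R]_a => u 0 j * t j 0 + \sum_(j0 <- r) u 0 j0 * t j0 0).
  by apply: funext => t; rewrite big_cons.
move=> t.
have h1 : {for t, continuous (fun t : 'cV[R]_a => u 0 j * t j 0)}.
  exact: (continuous_comp (@coord_continuous R a 1 j 0 t) (@mulrl_continuous R (u 0 j) (t j 0))).
exact: (@continuousD R R^o _ (fun t : 'cV[R]_a => u 0 j * t j 0)
          (fun t : 'cV[R]_a => \sum_(j0 <- r) u 0 j0 * t j0 0) t h1 (IH t)).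
Qed.

Lemma closed_halfspace a (u : 'rV[R]_a) (c : R) :
  closed [set t : 'cV[R]_a | (u *m t) 0 0 <= c].
Proof.
have -> : [set t : 'cV[R]_a | (u *m t) 0 0 <= c] =
  (fun t : 'cV[R]_a => (u *m t) 0 0) @^-1` [set x | x <= c] by [].
apply: preimage_closed; [move=> x _; exact: lin_cont | exact: closed_le].
Qed.

Lemma closed_sat a b (s : seq (cstr R (a + b))) :
  closed [set t : 'cV[R]_a | sat s (col_mx t 0)].
Proof.
elim: s => [|c s IH].
  have -> : [set t : 'cV[R]_a | sat [::] (col_mx t (0 : 'cV[R]_b))] = setT.
    by apply/seteqP; split.
  exact: closedT.
have -> : [set t : 'cV[R]_a | sat (c :: s) (col_mx t 0)] =
   [set t | (lsubmx c.1 *m t) 0 0 <= c.2] `&` [set t | sat s (col_mx t 0)].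
  apply/seteqP; split => t /=.
    move/andP => [h1 h2]; split => //.
    by move: h1; rewrite /sat1 /cval -{1}(hsubmxK c.1) mul_row_col mulmx0 addr0.
  move=> [h1 h2]; apply/andP; split => //.
  by rewrite /sat1 /cval -{1}(hsubmxK c.1) mul_row_col mulmx0 addr0.
apply: closedI => //; exact: closed_halfspace.
Qed.

Lemma closed_proj a b (s : seq (cstr R (a + b))) :
  closed [set t : 'cV[R]_a | exists y, sat s (col_mx t y)].
Proof.
have -> : [set t : 'cV[R]_a | exists y, sat s (col_mx t y)] =
  [set t | sat (FMall (map (@dir R a b) (enum 'I_b)) s) (col_mx t 0)].
  apply/seteqP; split => t /=.
    by move/(ex_comb_all (fun y => sat s y) t)/FMall_spec.
  by move/FMall_spec/(ex_comb_all (fun y => sat s y) t).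
exact: closed_sat.
Qed.

End Cont.

Unset Implicit Arguments. Unset Strict Implicit. Unset Printing Implicit Defensive.

Section Local.
Variables (R : realType) (K k : nat) (rr : 'I_k -> nat).
Variables (Mi : forall i, 'M[R]_(rr i, K)) (bi : forall i, 'cV[R]_(rr i)).

Definition ell i r (y : 'cV[R]_K) : R := (Mi i *m y) r 0.
Definition SS (y : 'cV[R]_K) : Prop := exists i, forall r, ell i r y <= bi i r 0.
Definition Loc (x v : 'cV[R]_K) : Prop :=
  exists i, (forall r, ell i r x <= bi i r 0) /\
            (forall r, ell i r x = bi i r 0 -> ell i r v <= 0).

Lemma ellD i r x y : ell i r (x + y) = ell i r x + ell i r y.
Proof. by rewrite /ell mulmxDr mxE. Qed.
Lemma ellZ i r c x : ell i r (c *: x) = c * ell i r x.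
Proof. by rewrite /ell -scalemxAr mxE. Qed.

Lemma ell_bound i r v : `|ell i r v| <= (\sum_j `|Mi i r j|) * enorm v.
Proof. by apply: lf_bound => j; exact: entry_enorm. Qed.

Lemma Loc_cone x v s : 0 < s -> Loc x v -> Loc x (s *: v).
Proof.
move=> s0 [i [h1 h2]]; exists i; split => // r hr.
by rewrite ellZ; apply: mulr_ge0_le0; [exact: ltW | exact: h2].
Qed.

Lemma local x : exists2 rho : R, 0 < rho &
  forall v, enorm v <= rho -> (SS (x + v) <-> Loc x v).
Proof.
pose C i r := \sum_j `|Mi i r j|.
pose g i r := ell i r x - bi i r 0.
pose T := \sum_i \sum_(r < rr i) (C i r + 1) / `|g i r|.
have T0 : 0 <= T.
  apply: sumr_ge0 => i _; apply: sumr_ge0 => r _.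
  by apply: divr_ge0 => //; apply: addr_ge0 => //; apply: sumr_ge0.
have T1 : 0 < 1 + T by rewrite ltr_pwDl.
exists (1 / (1 + T)); first by rewrite divr_gt0.
have key : forall i r v, g i r != 0 -> enorm v <= 1 / (1 + T) ->
    `|ell i r v| < `|g i r|.
  move=> i r v gn hv.
  have C0 : 0 <= C i r by apply: sumr_ge0.
  have gp : 0 < `|g i r| by rewrite normr_gt0.
  have tau : (C i r + 1) / `|g i r| <= T.
    rewrite /T (bigD1 i) //= (bigD1 r) //= -addrA lerDl.
    apply: addr_ge0; first by apply: sumr_ge0 => r' _; apply: divr_ge0 => //;
      apply: addr_ge0 => //; apply: sumr_ge0.
    apply: sumr_ge0 => i' _; apply: sumr_ge0 => r' _.
    by apply: divr_ge0 => //; apply: addr_ge0 => //; apply: sumr_ge0.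
  apply: le_lt_trans (ell_bound i r v) _.
  apply: le_lt_trans (ler_wpM2l C0 hv) _.
  rewrite mul1r ltr_pdivrMr //.
  have : `|g i r| * (1 + (C i r + 1) / `|g i r|) <= `|g i r| * (1 + T).
    by rewrite ler_wpM2l ?lerD // ltW.
  apply: lt_le_trans.
  rewrite mulrDr mulr1 mulrCA divff ?mulr1; last by rewrite gt_eqF.
  lra.
move=> v hv; split.
  move=> [i hi]; exists i; split.
    move=> r; rewrite leNgt; apply/negP => hlt.
    have gn : g i r != 0 by rewrite subr_eq0 gt_eqF.
    have := key i r v gn hv.
    have := hi r; rewrite ellD.
    have hg : `|g i r| = ell i r x - bi i r 0 by rewrite gtr0_norm // subr_gt0.
    rewrite hg.
    move=> h1 h2; have := ler_norm (- ell i r v); rewrite normrN => h3.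
    lra.
  move=> r hr; have := hi r; rewrite ellD hr.
  by rewrite -[X in _ <= X]addr0 lerD2l.
move=> [i [h1 h2]]; exists i => r; rewrite ellD.
have [e|ne] := eqVneq (ell i r x) (bi i r 0).
  by rewrite e -[X in _ <= X]addr0 lerD2l h2.
have gn : g i r != 0 by rewrite subr_eq0.
have hg : `|g i r| = bi i r 0 - ell i r x by rewrite ler0_norm ?opprB // subr_le0 h1.
have := key i r v gn hv; rewrite hg.
move=> h; have := ler_norm (ell i r v); lra.
Qed.

End Local.
Arguments ell {R K k rr} Mi i r y.
Arguments SS {R K k rr} Mi bi y.
Arguments Loc {R K k rr} Mi bi x v.
Arguments ellD {R K k rr} Mi i r x y.
Arguments ellZ {R K k rr} Mi i r c x.
Arguments ell_bound {R K k rr} Mi i r v.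
Arguments Loc_cone {R K k rr} Mi bi x v s.
Arguments local {R K k rr} Mi bi x.

Set Implicit Arguments. Unset Strict Implicit. Unset Printing Implicit Defensive.

Section Trip.
Variables (R : realType) (N m q : nat).

Definition trip (a : 'cV[R]_N) (w : 'cV[R]_m) (e : 'cV[R]_q) : 'cV[R]_(N + m + q) :=
  col_mx (col_mx a w) e.

Lemma tripD a w e a' w' e' :
  trip a w e + trip a' w' e' = trip (a + a') (w + w') (e + e').
Proof. by rewrite /trip !add_col_mx. Qed.

Lemma tripZ c a w e : c *: trip a w e = trip (c *: a) (c *: w) (c *: e).
Proof. by rewrite /trip !scale_col_mx. Qed.

Lemma sq_trip a w e : sq (trip a w e) = sq a + sq w + sq e.
Proof. by rewrite /trip !sq_col. Qed.

Lemma enormZ K c (v : 'cV[R]_K) : enorm (c *: v) = `|c| * enorm v.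
Proof. by rewrite !enormE sqZ sqrtrM ?sqr_ge0 // sqrtr_sqr. Qed.

Lemma enorm_ge0 K (v : 'cV[R]_K) : 0 <= enorm v.
Proof. exact: sqrtr_ge0. Qed.

Lemma enorm_trip_le (c : R) a w e a' w' e' : 0 <= c ->
  sq a <= c ^+ 2 * sq a' -> sq w <= c ^+ 2 * sq w' -> sq e <= c ^+ 2 * sq e' ->
  enorm (trip a w e) <= c * enorm (trip a' w' e').
Proof.
move=> c0 h1 h2 h3; apply: enorm_le; first by rewrite mulr_ge0 // enorm_ge0.
rewrite exprMn enormE sqr_sqrtr ?sq_ge0 // !sq_trip !mulrDr.
by rewrite !lerD.
Qed.

Lemma sign_stable (al be G g : R) : (al != 0 -> `|be| < G * `|al|) -> G <= g ->
  ((be + g * al <= 0) = (be + G * al <= 0)) /\ ((be + g * al == 0) = (be + G * al == 0)).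
Proof.
move=> h hg.
have [a0|a0|a0] := ltgtP al 0.
- have hb : `|be| < - (G * al) by rewrite -mulrN -(ltr0_norm a0); apply: h; exact: ltr0_neq0.
  have := ler_wnM2r (ltW a0) hg; have := ler_norm be => h4 h5.
  have l1 : be + g * al < 0 by lra.
  have l2 : be + G * al < 0 by lra.
  by rewrite (ltW l1) (ltW l2) (lt_eqF l1) (lt_eqF l2).
- have hb : `|be| < G * al by rewrite -[X in _ < _ * X](gtr0_norm a0); apply: h; exact: lt0r_neq0.
  have := ler_wpM2r (ltW a0) hg; have := ler_norm (- be); rewrite normrN => h4 h5.
  have l1 : 0 < be + g * al by lra.
  have l2 : 0 < be + G * al by lra.
  by rewrite !leNgt l1 l2 (gt_eqF l1) (gt_eqF l2).
- by rewrite a0 !mulr0.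
Qed.

End Trip.

Unset Implicit Arguments. Unset Strict Implicit. Unset Printing Implicit Defensive.

Section Key.
Variables (R : realType) (N m q k : nat) (rr : 'I_k -> nat).
Variables (Mi : forall i, 'M[R]_(rr i, N + m + q)) (bi : forall i, 'cV[R]_(rr i)).
Notation ell := (ell Mi).
Notation SS := (SS Mi bi).
Notation Loc := (Loc Mi bi).
Notation trip := (@trip R N m q).
Hypothesis HS : forall xi z eta (g : R), 0 < g -> SS (trip xi z eta) ->
  SS (trip xi (g *: z) (g *: eta)).

Lemma ell_split i r a w e : ell i r (trip a w e) = ell i r (trip a 0 0) + ell i r (trip 0 w e).
Proof. by rewrite -(ellD Mi) tripD !addr0 !add0r. Qed.

Lemma ell_split2 i r w e : ell i r (trip 0 w e) = ell i r (trip 0 w 0) + ell i r (trip 0 0 e).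
Proof. by rewrite -(ellD Mi) tripD !addr0 !add0r. Qed.

Lemma key (xb : 'cV[R]_N) (z : 'cV[R]_m) : exists2 rho : R, 0 < rho &
  forall xi z' eta, enorm (trip (xi - xb) (z' - z) eta) <= rho ->
    SS (trip xi z' eta) -> SS (trip xb z' eta).
Proof.
pose al i r := ell i r (trip 0 z 0).
pose be i r := ell i r (trip xb 0 0) - bi i r 0.
pose G := 1 + \sum_i \sum_(r < rr i) `|be i r| / `|al i r|.
have S0 : 0 <= \sum_i \sum_(r < rr i) `|be i r| / `|al i r|.
  by apply: sumr_ge0 => i _; apply: sumr_ge0 => r _; apply: divr_ge0.
have G1 : 1 <= G by rewrite lerDl.
have G0 : 0 < G by apply: lt_le_trans G1.
have Gal : forall i r, al i r != 0 -> `|be i r| < G * `|al i r|.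
  move=> i r an; have ap : 0 < `|al i r| by rewrite normr_gt0.
  rewrite -ltr_pdivrMr //.
  apply: le_lt_trans (_ : _ <= \sum_i \sum_(r < rr i) `|be i r| / `|al i r|) _; last first.
    by rewrite ltrDr ltr01.
  rewrite (bigD1 i) //= (bigD1 r) //= -addrA lerDl.
  apply: addr_ge0; first by apply: sumr_ge0 => r' _; apply: divr_ge0.
  by apply: sumr_ge0 => i' _; apply: sumr_ge0 => r' _; apply: divr_ge0.
pose X (g : R) := trip xb (g *: z) 0.
have ellX : forall i r g, ell i r (X g) - bi i r 0 = be i r + g * al i r.
  move=> i r g; rewrite /X ell_split ell_split2.
  have -> : trip 0 (g *: z) 0 = g *: trip 0 z 0 by rewrite tripZ !scaler0.
  rewrite ellZ.
  have -> : trip (0 : 'cV_N) (0 : 'cV_m) (0 : 'cV_q) = 0 *: trip 0 0 0 by rewrite scale0r /trip !col_mx0.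
  by rewrite ellZ mul0r addr0 /be /al; ring.
have sig : forall g, G <= g -> forall v, Loc (X g) v -> Loc (X G) v.
  move=> g hg v [i [h1 h2]]; exists i; split.
    move=> r; have := h1 r; rewrite -subr_le0 ellX (sign_stable (Gal i r) hg).1.
    by rewrite -ellX subr_le0.
  move=> r /eqP; rewrite -subr_eq0 ellX -(sign_stable (Gal i r) hg).2 -ellX subr_eq0.
  by move/eqP; exact: h2.
have [rho1 rho1p hloc1] := local Mi bi (X G).
have trans : forall a w e t, 1 <= t -> Loc (X G) (trip a w e) ->
    Loc (X G) (trip (t^-1 *: a) w e).
  move=> a w e t t1 hL.
  have t0 : 0 < t by apply: lt_le_trans t1.
  have [rt rtp hloct] := local Mi bi (X (t * G)).
  pose v := trip a w e.
  pose mn := Num.min rho1 rt.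
  have mn0 : 0 < mn by rewrite lt_min rho1p rtp.
  have ev0 := enorm_ge0 v.
  pose s := mn / (t * (enorm v + 1)).
  have s0 : 0 < s by rewrite divr_gt0 // mulr_gt0 // ltr_pwDr.
  have tsv : t * s * enorm v <= mn.
    have e1 : 0 < enorm v + 1 by rewrite ltr_pwDr.
    have ts : t * s = mn / (enorm v + 1).
      by rewrite /s; field; rewrite gt_eqF // gt_eqF.
    by rewrite ts mulrAC ler_pdivrMr // ler_wpM2l ?ltW //; lra.
  have hs1 : enorm (s *: v) <= rho1.
    rewrite enormZ gtr0_norm //; apply: le_trans (_ : _ <= mn) _; last by rewrite ge_min lexx.
    by apply: le_trans tsv; rewrite ler_wpM2r // ler_peMl // ltW.
  have S1 : SS (X G + s *: v) by apply/(hloc1 _ hs1); exact: (Loc_cone Mi bi).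
  pose v' := trip (s *: a) ((t * s) *: w) ((t * s) *: e).
  have ev' : enorm v' <= t * s * enorm v.
    apply: enorm_trip_le; first by rewrite mulr_ge0 // ltW.
    - have ss : s ^+ 2 <= (t * s) ^+ 2.
        by rewrite [(t * s) ^+ 2]exprMn; apply: ler_peMl; [exact: sqr_ge0 | rewrite expr_ge1 // ltW].
      by rewrite sqZ ler_wpM2r ?sq_ge0.
    - by rewrite sqZ.
    - by rewrite sqZ.
  have hv' : enorm v' <= rt.
    by apply: le_trans ev' _; apply: le_trans tsv _; by rewrite ge_min lexx orbT.
  have S3 : SS (X (t * G) + v').
    have -> : X (t * G) + v' = trip (xb + s *: a) (t *: (G *: z + s *: w)) (t *: (s *: e)).
      by rewrite /X /v' tripD add0r scalerDr !scalerA.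
    apply: HS => //; move: S1; rewrite /X /v tripZ tripD add0r.
    by [].
  have L3 : Loc (X G) v' by apply: (sig (t * G)); [rewrite ler_peMl // ltW | exact/(hloct _ hv')].
  have tsi : 0 < (t * s)^-1 by rewrite invr_gt0 mulr_gt0.
  have := Loc_cone Mi bi _ _ _ tsi L3.
  have ts0 : t * s != 0 by rewrite mulf_neq0 // gt_eqF.
  rewrite /v' tripZ !scalerA mulVf // !scale1r invfM -mulrA mulVf ?mulr1 // gt_eqF //.
have zero : forall a w e, Loc (X G) (trip a w e) -> Loc (X G) (trip 0 w e).
  move=> a w e hL; apply: contrapT => hn.
  have bad : forall i, (forall r, ell i r (X G) <= bi i r 0) ->
      exists2 r, ell i r (X G) = bi i r 0 & 0 < ell i r (trip 0 w e).
    move=> i hi; apply: contrapT => hno; apply: hn; exists i; split => // r hr.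
    by rewrite leNgt; apply/negP => hp; apply: hno; exists r.
  pose Aa i r := ell i r (trip a 0 0).
  pose p i r := ell i r (trip 0 w e).
  pose T := \sum_i \sum_(r < rr i) `|Aa i r| / `|p i r|.
  have T0 : 0 <= T by apply: sumr_ge0 => i _; apply: sumr_ge0 => r _; apply: divr_ge0.
  pose t := 1 + T.
  have t1 : 1 <= t by rewrite lerDl.
  have t0 : 0 < t by apply: lt_le_trans t1.
  have [i [h1 h2]] := trans a w e t t1 hL.
  have [r hr pr] := bad i h1.
  have := h2 r hr; rewrite ell_split.
  have -> : trip (t^-1 *: a) 0 0 = t^-1 *: trip a 0 0 by rewrite tripZ !scaler0.
  rewrite ellZ.
  have tp : `|Aa i r| < t * p i r.
    have pp : 0 < p i r by [].
    rewrite -ltr_pdivrMr // -[X in _ / X]gtr0_norm //.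
    apply: le_lt_trans (_ : _ <= T) _; last by rewrite /t ltrDr ltr01.
    rewrite /T (bigD1 i) //= (bigD1 r) //= -addrA lerDl.
    apply: addr_ge0; first by apply: sumr_ge0 => r' _; apply: divr_ge0.
    by apply: sumr_ge0 => i' _; apply: sumr_ge0 => r' _; apply: divr_ge0.
  move=> h.
  have : t * (t^-1 * Aa i r + p i r) <= 0 by apply: mulr_ge0_le0 => //; exact: ltW.
  rewrite mulrDr mulrA mulfV ?gt_eqF // mul1r => h'.
  by have := ler_norm (- Aa i r); rewrite normrN; lra.
exists (rho1 / G); first by rewrite divr_gt0.
move=> xi z' eta hn hS.
have hS1 : SS (X G + trip (xi - xb) (G *: (z' - z)) (G *: eta)).
  have -> : X G + trip (xi - xb) (G *: (z' - z)) (G *: eta) = trip xi (G *: z') (G *: eta).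
    rewrite /X tripD; congr trip; first by rewrite addrC subrK.
      by rewrite -scalerDr addrC subrK.
    by rewrite add0r.
  exact: HS.
have hv : enorm (trip (xi - xb) (G *: (z' - z)) (G *: eta)) <= rho1.
  apply: le_trans (_ : _ <= G * enorm (trip (xi - xb) (z' - z) eta)) _.
    apply: enorm_trip_le; first exact: ltW.
    - by apply: ler_peMl; [exact: sq_ge0 | rewrite expr_ge1 // ltW].
    - by rewrite sqZ.
    - by rewrite sqZ.
  by rewrite mulrC -ler_pdivlMr.
have L1 := (hloc1 _ hv).1 hS1.
have L0 := zero _ _ _ L1.
have hv0 : enorm (trip 0 (G *: (z' - z)) (G *: eta)) <= rho1.
  apply: le_trans hv; rewrite -[X in _ <= X]mul1r; apply: enorm_trip_le => //;
    by rewrite expr1n mul1r ?sq0 ?sq_ge0.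
have S0' := (hloc1 _ hv0).2 L0.
have : SS (trip xb (G *: z') (G *: eta)).
  by move: S0'; rewrite /X tripD addr0 add0r -scalerDr addrC subrK.
have Gi : 0 < G^-1 by rewrite invr_gt0.
move/(HS _ _ _ _ Gi).
by rewrite !scalerA mulVf ?gt_eqF // !scale1r.
Qed.

End Key.

Unset Implicit Arguments. Unset Strict Implicit. Unset Printing Implicit Defensive.

Lemma rowmul_entry (R : realType) r n (B : 'M[R]_(r, n)) (v : 'cV[R]_n) j :
  (row j B *m v) 0 0 = (B *m v) j 0.
Proof. by rewrite -row_mul mxE. Qed.

Lemma trip3 (R : realType) N m q r (M : 'M[R]_(r, N + m + q)) a w e j :
  (M *m trip a w e) j 0 = (lsubmx (lsubmx M) *m a) j 0 +
     (rsubmx (lsubmx M) *m w) j 0 + (rsubmx M *m e) j 0.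
Proof. by rewrite -{1}(hsubmxK M) -{1}(hsubmxK (lsubmx M)) /trip !mul_row_col !mxE. Qed.

Section Osc.
Variables (R : realType) (N m q k : nat) (rr : 'I_k -> nat).
Variables (Mi : forall i, 'M[R]_(rr i, N + m + q)) (bi : forall i, 'cV[R]_(rr i)).
Notation ell := (ell Mi).
Notation SS := (SS Mi bi).
Notation trip := (@trip R N m q).

Lemma ev_piece i r (xs : nat -> 'cV[R]_N) (zs : nat -> 'cV[R]_m) (es : nat -> 'cV[R]_q) x z e :
  bi i r 0 < ell i r (trip x z e) ->
  xs @ \oo --> x -> zs @ \oo --> z -> es @ \oo --> e ->
  \forall n \near \oo, bi i r 0 < ell i r (trip (xs n) (zs n) (es n)).
Proof.
move=> hr cx cz ce.
pose gap := ell i r (trip x z e) - bi i r 0.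
have gap0 : 0 < gap by rewrite subr_gt0.
have g3 : 0 < gap / 3 by rewrite divr_gt0.
have c1 := @continuous_cvg _ _ _ _ _ _ _ _ (@lin_cont _ _ (row r (lsubmx (lsubmx (Mi i)))) x) cx.
have c2 := @continuous_cvg _ _ _ _ _ _ _ _ (@lin_cont _ _ (row r (rsubmx (lsubmx (Mi i)))) z) cz.
have c3 := @continuous_cvg _ _ _ _ _ _ _ _ (@lin_cont _ _ (row r (rsubmx (Mi i))) e) ce.
have d1 := cvgr_dist_lt _ _ (c1 _) _ g3.
have d2 := cvgr_dist_lt _ _ (c2 _) _ g3.
have d3 := cvgr_dist_lt _ _ (c3 _) _ g3.
near=> n.
have h1 : `|(row r (lsubmx (lsubmx (Mi i))) *m x) 0 0 -
             (row r (lsubmx (lsubmx (Mi i))) *m xs n) 0 0| < gap / 3.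
  by near: n; exact: d1.
have h2 : `|(row r (rsubmx (lsubmx (Mi i))) *m z) 0 0 -
             (row r (rsubmx (lsubmx (Mi i))) *m zs n) 0 0| < gap / 3.
  by near: n; exact: d2.
have h3 : `|(row r (rsubmx (Mi i)) *m e) 0 0 -
             (row r (rsubmx (Mi i)) *m es n) 0 0| < gap / 3.
  by near: n; exact: d3.
move: h1 h2 h3 gap0; rewrite /gap /ell !trip3 !rowmul_entry.
set A1 := (lsubmx _ *m x) r 0; set A2 := (rsubmx (lsubmx _) *m z) r 0.
set A3 := (rsubmx _ *m e) r 0.
set B1 := (lsubmx _ *m xs n) r 0; set B2 := (rsubmx (lsubmx _) *m zs n) r 0.
set B3 := (rsubmx _ *m es n) r 0.
move=> h1 h2 h3 hg.
have := ler_norm (A1 - B1); have := ler_norm (A2 - B2); have := ler_norm (A3 - B3).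
lra.
Unshelve. all: by end_near.
Qed.

Lemma osc (xs : nat -> 'cV[R]_N) (zs : nat -> 'cV[R]_m) (es : nat -> 'cV[R]_q) x z e :
  (forall n, SS (trip (xs n) (zs n) (es n))) ->
  xs @ \oo --> x -> zs @ \oo --> z -> es @ \oo --> e -> SS (trip x z e).
Proof.
move=> hS cx cz ce; apply: contrapT => hn.
have ev : forall i, \forall n \near \oo,
    ~ (forall r, ell i r (trip (xs n) (zs n) (es n)) <= bi i r 0).
  move=> i.
  have [r hr] : exists r, bi i r 0 < ell i r (trip x z e).
    apply: contrapT => hno; apply: hn; exists i => r; rewrite leNgt; apply/negP => h.
    by apply: hno; exists r.
  apply: filterS (ev_piece _ _ _ _ _ _ _ _ hr cx cz ce) => n h hall.
  by have := hall r; rewrite leNgt h.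
have [n hn'] := filter_ex (filter_forall _ ev).
by have [i hi] := hS n; exact: (hn' i hi).
Qed.

End Osc.

Unset Implicit Arguments. Unset Strict Implicit. Unset Printing Implicit Defensive.

Lemma all_enumP (T : finType) (p : pred T) : reflect (forall x, p x) (all p (enum T)).
Proof. by apply: (iffP allP) => h x; [apply: h; rewrite mem_enum | move=> _; exact: h]. Qed.

Lemma menum (T : finType) (x : T) : x \in Finite.enum T.
Proof. by rewrite -enumT mem_enum. Qed.

Lemma negentry (R : realType) a b (M : 'M[R]_(a, b)) i j : (- M) i j = - M i j.
Proof. by rewrite mxE. Qed.

Lemma zeroentry (R : realType) a b i j : (0 : 'M[R]_(a, b)) i j = 0.
Proof. by rewrite mxE. Qed.

Lemma cval3 (R : realType) a b1 b2 (u : 'rV[R]_a) (v1 : 'rV[R]_b1) (v2 : 'rV[R]_b2) c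
  (t : 'cV[R]_a) z e :
  cval (row_mx u (row_mx v1 v2), c) (col_mx t (col_mx z e)) =
  (u *m t) 0 0 + (v1 *m z) 0 0 + (v2 *m e) 0 0.
Proof. by rewrite /cval /= !mul_row_col !mxE addrA. Qed.

Section Img.
Variables (R : realType) (N m q k : nat) (rr : 'I_k -> nat).
Variables (Mi : forall i, 'M[R]_(rr i, N + m + q)) (bi : forall i, 'cV[R]_(rr i)).
Notation ell := (ell Mi).
Notation SS := (SS Mi bi).
Notation trip := (@trip R N m q).
Variables (xb : 'cV[R]_N) (Ax : 'M[R]_(q, m)).

Definition sys i : seq (cstr R (q + (m + q))) :=
  [seq (row_mx 0 (row_mx (row r (rsubmx (lsubmx (Mi i)))) (row r (rsubmx (Mi i)))),
        bi i r 0 - (lsubmx (lsubmx (Mi i)) *m xb) r 0) | r <- enum 'I_(rr i)]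
  ++ [seq (row_mx (row j (1%:M : 'M[R]_q)) (row_mx (- row j Ax) 0), 0) | j <- enum 'I_q]
  ++ [seq (row_mx (- row j (1%:M : 'M[R]_q)) (row_mx (row j Ax) 0), 0) | j <- enum 'I_q].

Lemma sys_sem i t z e :
  sat (sys i) (col_mx t (col_mx z e)) <->
  (forall r, ell i r (trip xb z e) <= bi i r 0) /\ Ax *m z = t.
Proof.
rewrite /sat /sys !all_cat !all_map; split.
  move/andP=> [/allP h1 /andP[/allP h2 /allP h3]]; split.
    move=> r; have := h1 r (menum _ r); rewrite /= /sat1 cval3 mul0mx mxE add0r !rowmul_entry.
    rewrite /ell trip3 /=; lra.
  apply/matrixP => j c; rewrite ord1.
  have := h2 j (menum _ j); have := h3 j (menum _ j); rewrite /= /sat1 !cval3.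
  rewrite !mul0mx !mulNmx !negentry !zeroentry !rowmul_entry !mul1mx /=; lra.
move=> [h1 h2]; apply/andP; split.
  apply/allP => r _; have := h1 r; rewrite /= /sat1 cval3 mul0mx mxE add0r !rowmul_entry.
  rewrite /ell trip3 /=; lra.
apply/andP; split; apply/allP => j _; rewrite /= /sat1 !cval3;
  rewrite !mul0mx !mulNmx !negentry !zeroentry !rowmul_entry !mul1mx -h2 /=; lra.
Qed.

Lemma closed_img :
  closed [set t : 'cV[R]_q | exists z eta, SS (trip xb z eta) /\ Ax *m z = t].
Proof.
have -> : [set t : 'cV[R]_q | exists z eta, SS (trip xb z eta) /\ Ax *m z = t] =
    \bigcup_(i in [set: 'I_k]) [set t | exists y, sat (sys i) (col_mx t y)].
  apply/seteqP; split => t.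
    move=> [z [eta [[i hi] he]]]; exists i => //; exists (col_mx z eta).
    by apply/sys_sem; split.
  move=> [i _ [y hy]]; rewrite -(vsubmxK y) in hy.
  have [h1 h2] := (sys_sem _ _ _ _).1 hy.
  by exists (usubmx y), (dsubmx y); split => //; exists i.
apply: closed_bigcup; [exact: finite_finset | move=> i _; exact: closed_proj].
Qed.

End Img.

Unset Implicit Arguments. Unset Strict Implicit. Unset Printing Implicit Defensive.

Theorem proposition1 (R : realType) (n p m q : nat)
    (U D : set 'cV[R]_(n + p)) (G : svmap R (n + p) m q)
    (A : 'cV[R]_(n + p) -> 'M[R]_(q, m)) :
  open U -> D `<=` U -> D !=set0 ->
  (forall xi, D xi -> pos_homogeneous (G xi)) ->
  polyhedral_map D G ->
  outer_semicontinuous D G /\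
  forall xib, D xib ->
    let H := G xib in
    let Z := @unit_sphere R m `&` sdom H in
    let Z0 := [set z | Z z /\ exists eta, H z eta /\ A xib *m z + eta = 0] in
    closed [set A xib *m z | z in sdom H] /\
    exists c : R, 0 <= c /\
      forall z, Z0 z ->
        exists eps delta : R, 0 < eps /\ 0 < delta /\
          forall xi z', D xi -> @unit_sphere R m z' ->
            enorm (col_mx (xi - xib) (z' - z)) <= eps ->
            G xi z' `&` cball 0 delta `<=`
              [set eta | exists2 eta', H z' eta' &
                           enorm (eta - eta') <= c * enorm (xi - xib)].
Proof.
move=> _ _ _ hom [k [P [hconv hequiv]]].
have : forall i, exists y : {r : nat & ('M[R]_(r, n + p + m + q) * 'cV[R]_r)%type},
    P i = [set x | forall j, ((projT2 y).1 *m x) j 0 <= (projT2 y).2 j 0].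
  by move=> i; have [r [M [b hb]]] := hconv i; exists (existT _ r (M, b)).
move=> /choice [f hf].
pose rr i := projT1 (f i).
pose Mi i : 'M[R]_(rr i, n + p + m + q) := (projT2 (f i)).1.
pose bi i : 'cV[R]_(rr i) := (projT2 (f i)).2.
have equiv : forall xi z eta, (D xi /\ G xi z eta) <-> SS Mi bi (trip xi z eta).
  move=> xi z eta; rewrite hequiv; split => -[i hi]; exists i; move: hi; rewrite hf //.
have HS : forall xi z eta (g : R), 0 < g -> SS Mi bi (trip xi z eta) ->
    SS Mi bi (trip xi (g *: z) (g *: eta)).
  move=> xi z eta g g0 /equiv [Dxi hG]; apply/equiv; split => //.
  by rewrite (hom xi Dxi g z g0); exists eta.
split.
  move=> xi z Dxi eta [xs [zs [es [hD [hG [cx [cz ce]]]]]]].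
  have : SS Mi bi (trip xi z eta).
    apply: (@osc _ _ _ _ _ _ Mi bi _ _ _ _ _ _ _ cx cz ce) => k0; apply/equiv; split; [exact: hD | exact: hG].
  by move/equiv => [].
move=> xib Dxib H Z Z0; split.
  have -> : [set A xib *m z | z in sdom H] =
      [set t | exists z eta, SS Mi bi (trip xib z eta) /\ A xib *m z = t].
    apply/seteqP; split => t.
      move=> [z [eta hz] <-]; exists z, eta; split => //; apply/equiv; split => //.
    move=> [z [eta [hS <-]]]; exists z => //; exists eta.
    by have [] := (equiv _ _ _).2 hS.
  exact: (@closed_img _ _ _ _ _ _ Mi bi xib (A xib)).
exists 0; split => // z _.
have [rho rhop hkey] := @key _ _ _ _ _ _ Mi bi HS xib z.
exists (rho / 2), (rho / 2); split; first by rewrite divr_gt0.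
split; first by rewrite divr_gt0.
move=> xi z' Dxi _ hn eta [hG hball].
exists eta; last by rewrite subrr enorm0 mul0r.
have hS : SS Mi bi (trip xi z' eta) by apply/equiv.
suff : SS Mi bi (trip xib z' eta) by move/equiv => [].
apply: (hkey xi) hS.
apply: enorm_le; first exact: ltW.
rewrite /trip sq_col.
have h1 := sq_le hn.
have h2 : sq eta <= (rho / 2) ^+ 2 by apply: sq_le; move: hball; rewrite /cball /= subr0.
apply: le_trans (lerD h1 h2) _.
rewrite -subr_ge0.
have -> : rho ^+ 2 - ((rho / 2) ^+ 2 + (rho / 2) ^+ 2) = (rho / 2) ^+ 2 * 2 by field.
by rewrite mulr_ge0 // sqr_ge0.
Qed.
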